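(* Let $(V,Y,\mathbf 1,\omega)$ be a vertex operator algebra, $g$ an automorphism of $V$ of finite order $T$, and $n,m\in(1/T)\mathbb N$. Then $g$ is an automorphism of the vertex algebra $\exp(V,\omega)$, and $A_{g,n}(V,\omega)=\tilde A_{g,n}(\exp(V,\omega))$ and $A_{g,n,m}(V,\omega)=\tilde A_{g,n,m}(\exp(V,\omega))$ (equal subspaces $O_{g,n}(V)=\tilde O_{g,n}(\exp(V,\omega))$, $O_{g,n,m}(V)=\tilde O_{g,n,m}(\exp(V,\omega))$ and equal products).
   Context: A vertex operator algebra $(V,Y,\mathbf 1,\omega)$ is a vertex algebra with $V=\bigoplus_{n\in\mathbb Z}V_n$, $\dim V_n<\infty$, $V_n=0$ for $n\ll0$, $\omega\in V_2$, $L(m)=\omega_{m+1}$ satisfying the Virasoro relations with central charge $c$, $L(0)|_{V_n}=n$, $Y(L(-1)w,z)=\frac d{dz}Y(w,z)$; $\mathrm{wt}\,u=n$ for $u\in V_n$. An automorphism $g$ is a vertex algebra automorphism with $g\omega=\omega$; $V^r=\{v:gv=e^{-2\pi\sqrt{-1}r/T}v\}$. $\exp(V,\omega)$ is the vertex algebra on $V$ with vacuum $\mathbf 1$ and vertex operator $Y[u,z]=Y(e^{zL(0)}u,e^z-1)$ (its $\mathcal D$-operator is $L(-1)+L(0)$). For $k,l\in\{0,\dots,T-1\}$, $\delta_k(l)=1$ if $k\ge l$, $0$ if $k<l$, $\delta_k(T)=0$; $n=\lfloor n\rfloor+\bar n/T$. VOA side: for homogeneous $u\in V^r$, $v\in V$,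 $m,n,p\in(1/T)\mathbb N$ with $\bar p-\bar n\equiv r$: $u*_{g,m,p}^{\,n}v=\sum_{i=0}^{\lfloor p\rfloor}(-1)^i\binom{\lfloor m\rfloor+\lfloor n\rfloor-\lfloor p\rfloor-1+\delta_{\bar m}(r)+\delta_{\bar n}(T-r)+i}{i}\operatorname{Res}_z\frac{(1+z)^{\mathrm{wt}u-1+\lfloor m\rfloor+\delta_{\bar m}(r)+r/T}}{z^{\lfloor m\rfloor+\lfloor n\rfloor-\lfloor p\rfloor+\delta_{\bar m}(r)+\delta_{\bar n}(T-r)+i}}Y(u,z)v$, else $0$; $u\circ_{g,m}^{\,n}v=\operatorname{Res}_z\frac{(1+z)^{\mathrm{wt}u-1+\lfloor m\rfloor+\delta_{\bar m}(r)+r/T}}{z^{\lfloor m\rfloor+\lfloor n\rfloor+\delta_{\bar m}(r)+\delta_{\bar n}(T-r)+1}}Y(u,z)v$; $O'_{g,n,m}(V)=\mathrm{span}\{u\circ_{g,m}^{\,n}v\}+\mathrm{span}\{(L(-1)+L(0)+m-n)u\}$; $O''_{g,n,m}$, $O'''_{g,n,m}$, $O_{g,n,m}=O'+O''+O'''$ are defined as below with $*$ in place of $\bullet$ and $O'$ in place of $\tilde O'$; $O_{g,n}=O'_{g,n,n}$, $A_{g,n}(V,\omega)=V/O_{g,n}(V)$ with product $*_{g,n,n}^{\,n}$, $A_{g,n,m}(V,\omega)=V/O_{g,n,m}(V)$ with left action $*_{g,m,n}^{\,n}$ and right action $*_{g,m,m}^{\,n}$. Vertex algebra side (for a vertex algebra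 $(V',Y',\mathbf 1)$ with $\mathcal D'v=v_{-2}\mathbf 1$ and automorphism $g$): for $u\in V'^r$, $\bar p-\bar n\equiv r$: $u\bullet_{g,m,p}^{\,n}v=\sum_{i=0}^{\lfloor p\rfloor}(-1)^i\binom{\lfloor m\rfloor+\lfloor n\rfloor-\lfloor p\rfloor-1+\delta_{\bar m}(r)+\delta_{\bar n}(T-r)+i}{i}\operatorname{Res}_x\frac{e^{x(\lfloor m\rfloor+\delta_{\bar m}(r)+r/T)}}{(e^x-1)^{\lfloor m\rfloor+\lfloor n\rfloor-\lfloor p\rfloor+\delta_{\bar m}(r)+\delta_{\bar n}(T-r)+i}}Y'(u,x)v$, else $0$; $u\diamond_{g,m}^{\,n}v=\operatorname{Res}_x\frac{e^{x(\delta_{\bar m}(r)+\lfloor m\rfloor+r/T)}}{(e^x-1)^{\lfloor m\rfloor+\lfloor n\rfloor+\delta_{\bar m}(r)+\delta_{\bar n}(T-r)+1}}Y'(u,x)v$; $\tilde O'_{g,n,m}=\mathrm{span}\{u\diamond_{g,m}^{\,n}v\}+\mathrm{span}\{(\mathcal D'+m-n)u\}$; $\tilde O''_{g,n,m}$ is the span of all $u\bullet_{g,m,p_3}^{\,n}\big((a\bullet_{g,p_1,p_2}^{\,p_3}b)\bullet_{g,m,p_1}^{\,p_3}c-a\bullet_{g,m,p_2}^{\,p_3}(b\bullet_{g,m,p_1}^{\,p_2}c)\big)$; $\tilde O'''_{g,n,m}=\sum_{p_1,p_2}(V'\bullet_{g,p_1,p_2}^{\,n}\tilde O'_{g,p_2,p_1})\bullet_{g,m,p_1}^{\,n}V'$;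 $\tilde O_{g,n,m}=\tilde O'+\tilde O''+\tilde O'''$; $\tilde O_{g,n}=\tilde O'_{g,n,n}$; $\tilde A_{g,n}(V')=V'/\tilde O_{g,n}$ with product $\bullet_{g,n,n}^{\,n}$; $\tilde A_{g,n,m}(V')=V'/\tilde O_{g,n,m}$ with left action $\bullet_{g,m,n}^{\,n}$ and right action $\bullet_{g,m,m}^{\,n}$. *)

(* Defs.v *)
(* Vertex (operator) algebras are encoded through their modes:
   [Y u k v] stands for u_k v, i.e. Y(u,z)v = \sum_k (Y u k v) z^{-k-1}. *)
From HB Require Import structures.
From mathcomp Require Import all_boot all_order all_algebra.
From Stdlib Require Import ClassicalEpsilon.
Set Implicit Arguments. Unset Strict Implicit. Unset Printing Implicit Defensive.
Import Order.TTheory GRing.Theory Num.Theory.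
Local Open Scope ring_scope.

Definition fsum (V : zmodType) (f : nat -> V) : V :=
  match excluded_middle_informative
          (exists n : nat, forall i : nat, (n <= i)%N -> f i = 0) with
  | left H => \sum_(i < proj1_sig (constructive_indefinite_description _ H)) f i
  | right _ => 0
  end.

Inductive span (C : pzRingType) (V : lmodType C) (S : V -> Prop) : V -> Prop :=
  | span_gen v : S v -> span S v
  | span0 : span S 0
  | spanD v w : span S v -> span S w -> span S (v + w)
  | spanZ (a : C) v : span S v -> span S (a *: v).

Definition binC (C : fieldType) (a : C) (i : nat) : C :=
  (\prod_(t < i) (a - t%:R)) / (i`!)%:R.

(* Formal power series  \sum_i f i x^i  as coefficient functions.      *)
Section PowerSeries.
Variable C : fieldType.
Definition ps1 : nat -> C := fun i => (i == 0)%:R.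
Definition psmul (f h : nat -> C) : nat -> C :=
  fun i => \sum_(j < i.+1) f j * h (i - j)%N.
Definition pspow (f : nat -> C) (k : nat) : nat -> C := iter k (psmul f) ps1.
(* first n+1 coefficients of the inverse series of f (f 0 <> 0) *)
Fixpoint psinv_seq (f : nat -> C) (n : nat) : seq C :=
  match n with
  | 0 => [:: (f 0%N)^-1]
  | n'.+1 => let s := psinv_seq f n' in
      rcons s (- (f 0%N)^-1 *
               \sum_(j < n'.+1) f j.+1 * nth 0 s (n' - j)%N)
  end.
Definition psinv (f : nat -> C) : nat -> C := fun i => nth 0 (psinv_seq f i) i.
Definition pszpow (f : nat -> C) (a : int) : nat -> C :=
  match a with
  | Posz k => pspow f k
  | Negz k => pspow (psinv f) k.+1
  end.
Definition expser (b : C) : nat -> C := fun i => b ^+ i / (i`!)%:R.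
(* E(x) = (e^x - 1)/x *)
Definition Eser : nat -> C := fun i => ((i.+1)`!%:R)^-1.
End PowerSeries.

Section VA.
Variables (C : numClosedFieldType) (V : lmodType C).
Implicit Types (Y : V -> int -> V -> V) (one omega : V) (g : V -> V).

Definition binZ (m : int) (i : nat) : C := binC (m%:~R) i.

Definition is_vertex_algebra Y one : Prop :=
  [/\ (forall (a : C) u1 u2 k v, Y (a *: u1 + u2) k v = a *: Y u1 k v + Y u2 k v),
      (forall u k (a : C) v1 v2, Y u k (a *: v1 + v2) = a *: Y u k v1 + Y u k v2),
      [/\ (forall u v, exists N : int, forall k : int, N <= k -> Y u k v = 0),
      (forall k v, Y one k v = (if k == -1 then v else 0))
      &
      (forall u, Y u (-1) one = u /\ (forall k : int, 0 <= k -> Y u k one = 0))]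
    &
      (forall u v w (l m n : int),
         fsum (fun i => binZ m i *: Y (Y u (l + i%:Z) v) (m + n - i%:Z) w)
         = fsum (fun i => ((-1) ^+ i * binZ l i) *:
                 (Y u (l + m - i%:Z) (Y v (n + i%:Z) w)
                  - ((-1) ^ l : C) *: Y v (l + n - i%:Z) (Y u (m + i%:Z) w))))].

Definition Lop Y omega (m : int) : V -> V := Y omega (m + 1).
Definition L0 Y omega : V -> V := Lop Y omega 0.

Definition in_weight Y omega (n : int) (v : V) : Prop := L0 Y omega v = n%:~R *: v.

Definition is_VOA Y one omega (c : C) : Prop :=
  [/\ is_vertex_algebra Y one,
      [/\
      (forall v, exists s : seq (int * V),
          (forall p, p \in s -> in_weight Y omega p.1 p.2) /\ v = \sum_(p <- s) p.2),
      (forall n : int, exists b : seq V,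
          forall v, in_weight Y omega n v -> span (fun w => w \in b) v)
      &
      (exists N : int, forall n : int, n < N -> forall v, in_weight Y omega n v -> v = 0)],
      in_weight Y omega 2 omega,
      (forall (m n : int) v,
          Lop Y omega m (Lop Y omega n v) - Lop Y omega n (Lop Y omega m v)
          = (m - n)%:~R *: Lop Y omega (m + n) v
            + (if m + n == 0 then ((m ^+ 3 - m)%:~R / 12%:R * c) else 0) *: v)
    & (* Y(L(-1)w, z) = d/dz Y(w, z) *)
      (forall w (k : int) v, Y (Lop Y omega (-1) w) k v = - (k%:~R) *: Y w (k - 1) v)].

Definition is_VA_aut Y one g : Prop :=
  [/\ (forall (a : C) u v, g (a *: u + v) = a *: g u + g v),
      bijective g,
      (forall u k v, g (Y u k v) = Y (g u) k (g v))
    & g one = one].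

Definition is_VOA_aut Y one omega g : Prop := is_VA_aut Y one g /\ g omega = omega.

Definition has_order g (T : nat) : Prop :=
  [/\ (0 < T)%N, (forall v, iter T g v = v)
    & forall k, (0 < k < T)%N -> exists v, iter k g v <> v].

(* The vertex algebra exp(V, omega): Y[u,z] = Y(e^{z L(0)} u, e^z - 1). *)
(* Coefficient of z^{-k-1}:                                             *)
(*   u[k] v = sum_{i>=0} sum_{j<=i} 1/j! * [coef of z^{-k-1-j} in       *)
(*            (e^z-1)^{-(k+i)-1}] * (L(0)^j u)_{k+i} v,                 *)
(* where (e^z - 1)^a = z^a E(z)^a with E(z) = (e^z - 1)/z.               *)
Definition expY Y omega : V -> int -> V -> V :=
  fun u k v =>
    fsum (fun i => \sum_(j < i.+1)
            (((j`!)%:R)^-1 * pszpow (@Eser C) (- (k + i%:Z) - 1) (i - j)%N)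
              *: Y (iter j (L0 Y omega) u) (k + i%:Z) v).

Definition Dop Y one : V -> V := fun v => Y v (-2) one.

(* binom(L(0) + a, i) u  (for homogeneous u this is binom(wt u + a, i) u) *)
Fixpoint binprod (L : V -> V) (a : C) (i : nat) (u : V) : V :=
  match i with
  | 0 => u
  | i'.+1 => let w := binprod L a i' u in L w + (a - i'%:R) *: w
  end.
Definition binop (L : V -> V) (a : C) (i : nat) (u : V) : V :=
  ((i`!)%:R)^-1 *: binprod L a i u.

(* VOA side:  Res_z (1+z)^{wt u + a} / z^K  Y(u,z) v  (extended linearly in u) *)
Definition resVOA Y omega (a : C) (K : int) (u v : V) : V :=
  fsum (fun i => Y (binop (L0 Y omega) a i u) (i%:Z - K) v).

(* vertex algebra side:  Res_x e^{x a} / (e^x - 1)^K  Y'(u,x) v *)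
Definition resVA Y (a : C) (K : int) (u v : V) : V :=
  fsum (fun i => psmul (expser a) (pszpow (@Eser C) (- K)) i *: Y u (i%:Z - K) v).

(* g-eigenspaces V^r = { v | g v = e^{-2 pi i r/T} v }, r = 0..T-1      *)
Definition lam (T r : nat) : C := ((T.-root (-1 : C))^-1) ^+ (2 * r).
Definition in_eig g (T r : nat) (v : V) : Prop := g v = lam T r *: v.
Definition eproj g (T r : nat) (u : V) : V :=
  (T%:R)^-1 *: \sum_(k < T) ((lam T r) ^- k) *: iter k g u.

(* elements n of (1/T)N are represented by naturals N with n = N/T:
   floor n = N %/ T, nbar = N %% T *)
Definition fl (T N : nat) : int := (N %/ T)%:Z.
Definition fr (T N : nat) : nat := (N %% T)%N.
(* delta_k(l) for k, l in {0..T}, with delta_k(T) = 0 *)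
Definition delta (T k l : nat) : int := if ((l < T) && (l <= k))%N then 1 else 0.

(* Generic Zhu-type constructions.  [res a K u v] is the residue        *)
(* operation (resVOA or resVA), [s0] the shift (-1 on the VOA side,     *)
(* coming from (1+z)^{wt u - 1 + ...}; 0 on the vertex algebra side),   *)
(* [D] the operator (L(-1)+L(0), resp. D').                             *)
Section Zhu.
Variables (g : V -> V) (T : nat).
Variable res : C -> int -> V -> V -> V.
Variable s0 : C.
Variable D : V -> V.

Definition expo (r M : nat) : C :=
  s0 + (fl T M + delta T (fr T M) r)%:~R + r%:R / T%:R.

(* u *_{g,m,p}^n v  for u in V^r   (m = M/T, p = P/T, n = N/T) *)
Definition prod_r (r M P N : nat) (u v : V) : V :=
  if ((fr T P + T - fr T N) %% T == r)%N then
    let base := fl T M + fl T N - fl T P + delta T (fr T M) r + delta T (fr T N) (T - r) in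
    \sum_(i < (P %/ T).+1)
       ((-1) ^+ i * binC ((base - 1 + i%:Z)%:~R : C) i) *: res (expo r M) (base + i%:Z) u v
  else 0.

(* u o_{g,m}^n v  for u in V^r *)
Definition circ_r (r M N : nat) (u v : V) : V :=
  res (expo r M) (fl T M + fl T N + delta T (fr T M) r + delta T (fr T N) (T - r) + 1) u v.

Definition prod (M P N : nat) (u v : V) : V :=
  \sum_(r < T) prod_r r M P N (eproj g T r u) v.

Definition Oprime (N M : nat) : V -> Prop :=
  span (fun w =>
    (exists r u v, (r < T)%N /\ in_eig g T r u /\ w = circ_r r M N u v)
    \/ (exists u, w = D u + ((M%:R - N%:R) / T%:R) *: u)).

Definition O2 (N M : nat) : V -> Prop :=
  span (fun w => exists (P1 P2 P3 : nat) (u a b c : V),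
    w = prod M P3 N u (prod M P1 P3 (prod P1 P2 P3 a b) c
                       - prod M P2 P3 a (prod M P1 P2 b c))).

Definition O3 (N M : nat) : V -> Prop :=
  span (fun w => exists (P1 P2 : nat) (a o b : V),
    Oprime P2 P1 o /\ w = prod M P1 N (prod P1 P2 N a o) b).

Definition Ofull (N M : nat) : V -> Prop :=
  span (fun w => Oprime N M w \/ O2 N M w \/ O3 N M w).

Definition On (N : nat) : V -> Prop := Oprime N N.
End Zhu.

Definition Lm1L0 Y omega : V -> V := fun u => Lop Y omega (-1) u + L0 Y omega u.
Definition starV Y omega g T := prod g T (resVOA Y omega) (-1).
Definition OV_n Y omega g T N := On g T (resVOA Y omega) (-1) (Lm1L0 Y omega) N.
Definition OV_nm Y omega g T N M := Ofull g T (resVOA Y omega) (-1) (Lm1L0 Y omega) N M.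
Definition bulletE Y' g T := prod g T (resVA Y') 0.
Definition OE_n Y' one g T N := On g T (resVA Y') 0 (Dop Y' one) N.
Definition OE_nm Y' one g T N M := Ofull g T (resVA Y') 0 (Dop Y' one) N M.
End VA.

(* Main.v *)
Require Import Defs.
From HB Require Import structures.
From mathcomp Require Import all_boot all_order all_algebra.
From mathcomp Require Import boolp.
From mathcomp Require Import ring zify.
From Stdlib Require Import ClassicalEpsilon FunctionalExtensionality.
Import Order.TTheory GRing.Theory Num.Theory.
Local Open Scope ring_scope.
Set Implicit Arguments. Unset Strict Implicit. Unset Printing Implicit Defensive.

Lemma tri_ex (R : nmodType) (F : nat -> nat -> R) n :
  \sum_(0 <= a < n) \sum_(0 <= b < a.+1) F a b =
  \sum_(0 <= b < n) \sum_(b <= a < n) F a b.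
Proof.
elim: n => [|n IH]; first by rewrite !big_geq.
rewrite big_nat_recr //= IH.
rewrite [in RHS]big_nat_recr //= big_nat1.
have -> : \sum_(0 <= b < n) \sum_(b <= a < n.+1) F a b =
          \sum_(0 <= b < n) (\sum_(b <= a < n) F a b + F n b).
  by apply: eq_big_nat => b /andP[_ hb]; rewrite big_nat_recr // ltnW.
rewrite big_split /= -addrA; congr (_ + _).
by rewrite [in LHS]big_nat_recr.
Qed.

Section PS.
Variable C : fieldType.
Definition ps := nat -> C.
HB.instance Definition _ := Choice.on ps.
Definition ps0 : ps := fun _ => 0.
Definition psadd (f h : ps) : ps := fun i => f i + h i.
Definition psopp (f : ps) : ps := fun i => - f i.
Lemma psaddA : associative psadd.
Proof. by move=> f h k; apply: funext => i; rewrite /psadd addrA. Qed.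
Lemma psaddC : commutative psadd.
Proof. by move=> f h; apply: funext => i; rewrite /psadd addrC. Qed.
Lemma psadd0 : left_id ps0 psadd.
Proof. by move=> f; apply: funext => i; rewrite /psadd /ps0 add0r. Qed.
Lemma psaddN : left_inverse ps0 psopp psadd.
Proof. by move=> f; apply: funext => i; rewrite /psadd /ps0 /psopp addNr. Qed.
HB.instance Definition _ := GRing.isZmodule.Build ps psaddA psaddC psadd0 psaddN.

Definition psm (f h : ps) : ps := psmul f h.
Lemma psmE (f h : ps) i : psm f h i = \sum_(0 <= j < i.+1) f j * h (i - j)%N.
Proof. by rewrite big_mkord. Qed.

Lemma psmC : commutative psm.
Proof.
move=> f h; apply: funext => i; rewrite !psmE big_nat_rev /=.
apply: eq_big_nat => j /andP[_ hj]; rewrite mulrC add0n subSS subKn //.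
Qed.

Lemma psmA : associative psm.
Proof.
move=> f h k; apply: funext => n; rewrite !psmE.
under [RHS]eq_bigr do rewrite psmE mulr_suml.
rewrite tri_ex.
apply: eq_big_nat => b /andP[_ hb].
rewrite psmE mulr_sumr.
rewrite (big_addn 0 _ b).
have -> : (n.+1 - b = (n - b).+1)%N by rewrite subSn.
apply: eq_big_nat => c /andP[_ hc].
rewrite mulrA; congr (_ * _ * k _).
  by rewrite addnK.
by rewrite addnC subnDA.
Qed.

Definition pone : ps := ps1 C.
Lemma psm1 : left_id pone psm.
Proof.
move=> f; apply: funext => i; rewrite /psm /psmul big_ord_recl /= /pone /ps1 /= mul1r subn0.
by rewrite big1 ?addr0 // => j _; rewrite /= mul0r.
Qed.
Lemma psmDl : left_distributive psm (@GRing.add ps).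
Proof.
move=> f h k; apply: funext => i.
change (psmul (f + h) k i = psmul f k i + psmul h k i).
rewrite /psmul -big_split /=.
by apply: eq_bigr => j _; rewrite mulrDl.
Qed.
Lemma pone_neq0 : pone != 0.
Proof.
apply/eqP => /(congr1 (fun f : ps => f 0%N)); rewrite /pone /ps1 /= => /eqP.
by rewrite oner_eq0.
Qed.
HB.instance Definition _ := GRing.Zmodule_isComNzRing.Build ps psmA psmC psm1 psmDl pone_neq0.

Lemma coefM (f h : ps) i : (f * h) i = \sum_(j < i.+1) f j * h (i - j)%N.
Proof. by []. Qed.
Lemma coefD (f h : ps) i : (f + h) i = f i + h i.
Proof. by []. Qed.
Lemma coefN (f : ps) i : (- f) i = - f i.
Proof. by []. Qed.
Lemma coefB (f h : ps) i : (f - h) i = f i - h i.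
Proof. by []. Qed.
Lemma coef0 i : (0 : ps) i = 0.
Proof. by []. Qed.
Lemma coef1 i : (1 : ps) i = (i == 0%N)%:R.
Proof. by []. Qed.
Lemma coefMn (f : ps) n i : (f *+ n) i = f i *+ n.
Proof. by elim: n => [|n IH]; rewrite ?mulr0n // !mulrS coefD IH. Qed.
Lemma coef_sum I (r : seq I) (P : pred I) (F : I -> ps) i :
  (\sum_(j <- r | P j) F j) i = \sum_(j <- r | P j) F j i.
Proof. by elim/big_rec2: _ => // j a b _ <-. Qed.

Definition psC (c : C) : ps := fun i => if i == 0%N then c else 0.
Lemma coefCM c (f : ps) i : (psC c * f) i = c * f i.
Proof.
rewrite coefM big_ord_recl /= subn0 big1 ?addr0 // => j _.
by rewrite /psC /= mul0r.
Qed.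
Definition psx : ps := fun i => (i == 1%N)%:R.
Lemma coefxM (f : ps) i : (psx * f) i.+1 = f i.
Proof.
rewrite coefM big_ord_recl big_ord_recl /= big1 ?addr0.
  by rewrite /psx /= mul0r add0r mul1r subSS subn0.
by move=> j _; rewrite /psx /= mul0r.
Qed.
Lemma coefxM0 (f : ps) : (psx * f) 0%N = 0.
Proof. by rewrite coefM big_ord_recl big_ord0 /psx /= mul0r addr0. Qed.
Lemma pspowE (f : ps) k : pspow f k = f ^+ k.
Proof. by elim: k => [|k IH] //=; rewrite IH exprS. Qed.
End PS.

Section PSinv.
Variable C : fieldType.
Local Notation ps := (ps C).
Lemma psinv_seq_size (f : ps) n : size (psinv_seq f n) = n.+1.
Proof. by elim: n => [|n IH] //=; rewrite size_rcons IH. Qed.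
Lemma psinv_nth (f : ps) n i : (i <= n)%N -> nth 0 (psinv_seq f n) i = psinv f i.
Proof.
elim: n => [|n IH]; first by rewrite leqn0 => /eqP ->.
rewrite leq_eqVlt => /orP[/eqP -> //|hi].
by rewrite /= nth_rcons psinv_seq_size hi IH.
Qed.
Lemma psinvS (f : ps) n : psinv f n.+1 =
  - (f 0%N)^-1 * \sum_(j < n.+1) f j.+1 * psinv f (n - j)%N.
Proof.
rewrite /psinv /= nth_rcons psinv_seq_size ltnn eqxx; congr (_ * _).
by apply: eq_bigr => j _; rewrite psinv_nth // leq_subr.
Qed.
Lemma psinvP (f : ps) : f 0%N != 0 -> f * psinv f = 1.
Proof.
move=> f0; apply: funext => -[|n].
  by rewrite coefM big_ord_recl big_ord0 addr0 /psinv /= divff.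
rewrite coefM big_ord_recl /= subn0 psinvS mulrA mulrN divff // mulN1r.
rewrite coef1 /=. 
apply/eqP; rewrite addrC subr_eq0; apply/eqP; apply: eq_bigr => j _.
by rewrite /bump /= add1n subSS.
Qed.

Section ZP.
Variables (R : comNzRingType) (e w : R).
Hypothesis ew : e * w = 1.
Definition zp (a : int) : R := match a with Posz k => e ^+ k | Negz k => w ^+ k.+1 end.
Lemma zpMe a : zp a * e = zp (a + 1).
Proof.
case: a => [k|[|k]] /=.
- by rewrite addn1 exprSr.
- by rewrite expr1 mulrC ew.
- by rewrite subn1 /= exprS mulrC mulrA ew mul1r.
Qed.
Lemma zpMw a : zp a * w = zp (a - 1).
Proof.
case: a => [[|k]|k] /=.
- by rewrite expr0 mul1r.
- by rewrite subn1 /= exprS mulrAC ew mul1r.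
- by rewrite addn0 [in RHS]exprSr.
Qed.
Lemma zpD a b : zp a * zp b = zp (a + b).
Proof.
case: b => [k|k] /=.
  elim: k a => [|k IH] a; first by rewrite mulr1 addr0.
  by rewrite exprSr mulrA IH zpMe; congr zp; lia.
elim: k a => [|k IH] a; first by rewrite expr1 zpMw.
rewrite exprSr mulrA IH zpMw; congr zp; rewrite !NegzE; lia.
Qed.
End ZP.
End PSinv.

Section PSnum.
Variable C : numFieldType.
Local Notation ps := (ps C).
Lemma factr_neq0 n : (n`!)%:R != 0 :> C.
Proof. by rewrite pnatr_eq0 -lt0n fact_gt0. Qed.
Lemma natS_neq0 n : (n.+1)%:R != 0 :> C.
Proof. by rewrite pnatr_eq0. Qed.

Lemma expserD (a b : C) : (expser a : ps) * expser b = expser (a + b).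
Proof.
apply: funext => i; rewrite coefM /expser addrC exprDn mulr_suml.
apply: eq_bigr => -[j /= hj] _; rewrite ltnS in hj; rewrite -(bin_fact hj) !natrM -mulr_natr.
have h1 := factr_neq0 j; have h2 := factr_neq0 (i - j).
have h3 : 'C(i, j)%:R != 0 :> C by rewrite pnatr_eq0 -lt0n bin_gt0.
by field; rewrite ?h1 ?h2 ?h3 //=.
Qed.
Lemma expser0 : (expser 0 : ps) = 1.
Proof.
apply: funext => -[|i]; first by rewrite /expser expr0 /= divr1.
by rewrite /expser expr0n /= mul0r.
Qed.

Local Notation eps b := (expser b : ps).
Local Notation E := (Eser C : ps).
Local Notation X := (psx C : ps).
Lemma psxE : X * E = eps 1 - 1.
Proof.
apply: funext => -[|i]; first by rewrite coefxM0 coefB /expser expr0 coef1 /= divr1 subrr.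
by rewrite coefxM coefB coef1 /expser /Eser expr1n /= subr0 mul1r.
Qed.

Definition psd (f : ps) : ps := fun i => (i.+1)%:R * f i.+1.
Lemma psdD (f h : ps) : psd (f + h) = psd f + psd h.
Proof. by apply: funext => i; rewrite /psd !coefD mulrDr. Qed.
Lemma psd1 : psd 1 = 0.
Proof. by apply: funext => i; rewrite /psd coef1 /= mulr0. Qed.
Lemma psdM (f h : ps) : psd (f * h) = psd f * h + f * psd h.
Proof.
apply: funext => i; rewrite /psd coefD !coefM.
rewrite (_ : (i.+1)%:R * _ = \sum_(j < i.+2) (j%:R * (f j * h (i.+1 - j)%N))
            + \sum_(j < i.+2) ((i.+1 - j)%N%:R * (f j * h (i.+1 - j)%N))); last first.
  rewrite -big_split /= mulr_sumr; apply: eq_bigr => -[j /= hj] _.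
  by rewrite -mulrDl -natrD subnKC // -ltnS.
congr (_ + _).
  rewrite big_ord_recl /= mul0r add0r; apply: eq_bigr => j _.
  by rewrite /bump /= add1n subSS mulrA.
rewrite big_ord_recr /= subnn mul0r addr0; apply: eq_bigr => -[j /= hj] _.
by rewrite mulrCA subSn.
Qed.
Lemma psdZ c (f : ps) : psd (psC c * f) = psC c * psd f.
Proof. by apply: funext => i; rewrite /psd !coefCM mulrCA. Qed.
Lemma psdX (f : ps) n : psd (f ^+ n.+1) = (f ^+ n * psd f) *+ n.+1.
Proof.
elim: n => [|n IH]; first by rewrite expr1 expr0 mul1r.
rewrite [f ^+ n.+2]exprS psdM IH [RHS]mulrS; congr (_ + _).
  by rewrite mulrC.
by rewrite mulrnAr mulrA -exprS.
Qed.
Lemma psdexp (b : C) : psd (eps b) = psC b * eps b.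
Proof.
apply: funext => i; rewrite coefCM /psd /expser factS natrM exprS.
have h1 := factr_neq0 i; have h2 := natS_neq0 i.
by field; rewrite nat1r h1 h2.
Qed.
Lemma psdE : X * psd E = eps 1 - E.
Proof.
apply: funext => -[|i].
  by rewrite coefxM0 coefB /expser /Eser expr0 /= divr1 factS muln1 invr1 subrr.
rewrite coefxM coefB /psd /expser /Eser expr1n mul1r.
rewrite !factS !natrM.
have h1 := factr_neq0 i; have h2 := natS_neq0 i; have h3 := natS_neq0 i.+1.
have h4 : (1 + i%:R != 0 :> C) by rewrite nat1r.
have h5 : (2 + i%:R != 0 :> C) by rewrite -natrD pnatr_eq0.
by field; rewrite h1 h4 h5.
Qed.
End PSnum.

Section Qid.
Variable C : numFieldType.
Local Notation ps := (ps C).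
Local Notation eps b := (expser b : ps).
Local Notation E := (Eser C : ps).
Local Notation X := (psx C : ps).
Local Notation W := (psinv E : ps).
Lemma E0 : E 0%N = 1.
Proof. by rewrite /Eser /= invr1. Qed.
Lemma EW : E * W = 1.
Proof. by apply: psinvP; rewrite E0 oner_eq0. Qed.
Lemma psdW : psd W = - (psd E * W ^+ 2).
Proof.
apply/eqP; rewrite -subr_eq0 opprK; apply/eqP.
have h0 : psd E * W + E * psd W = 0 by rewrite -psdM EW psd1.
transitivity (W * (psd E * W + E * psd W) - psd W * (E * W - 1)); first by ring.
by rewrite h0 EW subrr !mulr0 subrr.
Qed.
Definition Qc (b : C) (l : nat) : C := (eps b * W ^+ l.+1) l.
Lemma Qc_rec1 b l : Qc (b + 1) l.+1 = Qc b l.+1 + Qc b l.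
Proof.
have h : eps (b + 1) * W ^+ l.+2 = eps b * W ^+ l.+2 + X * (eps b * W ^+ l.+1).
  rewrite -expserD.
  have e1 : eps 1 = 1 + X * E :> ps by rewrite psxE; ring.
  rewrite e1 !exprS; apply/eqP; rewrite -subr_eq0; apply/eqP.
  transitivity (X * eps b * (W * W ^+ l) * (E * W - 1)); first by ring.
  by rewrite EW subrr mulr0.
by rewrite /Qc h coefD coefxM.
Qed.
Lemma Qc_rec2 b l : b * Qc b l = Qc (b + 1) l.+1 *+ l.+1.
Proof.
set P := eps b * W ^+ l.+1.
have h : X * psd P = psC b * (X * P) - (eps (b + 1) * W ^+ l.+2) *+ l.+1 + P *+ l.+1.
  rewrite /P psdM psdexp psdX psdW -expserD !exprS expr0 mulr1.
  apply/eqP; rewrite -subr_eq0; apply/eqP.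
  transitivity ((- (eps b * (W * (W * W ^+ l))) * (X * psd E - (eps 1 - E))
                 + eps b * (W * W ^+ l) * (E * W - 1)) *+ l.+1); first by ring.
  by rewrite psdE EW !subrr !mulr0 addr0 mul0rn.
have := congr1 (fun f : ps => f l.+1) h.
rewrite coefxM coefD coefB coefCM coefxM !coefMn /psd /Qc -/P.
move=> H; rewrite mulr_natl in H.
apply/eqP; rewrite -subr_eq0; apply/eqP.
apply: (@addIr _ (P l.+1 *+ l.+1)).
by rewrite add0r -H.
Qed.
Lemma Qc0 b : Qc b 0 = 1.
Proof.
rewrite /Qc expr1 coefM big_ord_recl big_ord0 addr0 /= /expser expr0 /= divr1 mul1r.
by rewrite /psinv /= E0 invr1.
Qed.
Lemma Qc_rec b l : Qc b l.+1 * l.+1%:R = (b - l.+1%:R) * Qc b l.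
Proof.
have h2 := Qc_rec2 b l; rewrite Qc_rec1 -mulr_natr in h2.
rewrite mulrBl h2; ring.
Qed.
Lemma Qc_bin b l : Qc b l = binC (b - 1) l.
Proof.
elim: l => [|l IH]; first by rewrite Qc0 /binC big_ord0 div1r invr1.
have hl := natS_neq0 C l.
apply: (mulIf hl); rewrite Qc_rec IH /binC big_ord_recr /= factS natrM.
have hf := factr_neq0 C l.
by field; rewrite hf nat1r hl.
Qed.
End Qid.

Section Key.
Variable C : numFieldType.
Local Notation ps := (ps C).
Local Notation E := (Eser C : ps).
Local Notation W := (psinv E : ps).
Lemma pszpow_zp (a : int) : (pszpow E a : ps) = zp E W a.
Proof. by case: a => k; rewrite /pszpow /zp pspowE. Qed.
Lemma coef_key (a w : C) (K : int) (l : nat) :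

  \sum_(i < l.+1) psmul (expser a) (pszpow E (- K)) i *
     psmul (expser w) (pszpow E (- ((i%:Z - K) + (l - i)%N%:Z) - 1)) (l - i)%N
  = binC (a + w - 1) l.
Proof.
transitivity ((((expser a : ps) * pszpow E (- K)) * ((expser w : ps) * pszpow E (K - (l.+1)%:Z))) l).
  rewrite coefM; apply: eq_bigr => -[i /= hi] _; congr (_ * psmul _ (pszpow _ _) _).
  rewrite ltnS in hi; lia.
rewrite !pszpow_zp mulrACA expserD (zpD (EW C)).
have -> : (- K + (K - (l.+1)%:Z) = Negz l)%R by rewrite NegzE; lia.
by rewrite /= -/(Qc _ l) Qc_bin.
Qed.
End Key.

Section Fsum.
Variable V : zmodType.
Definition fsupp (f : nat -> V) := exists n : nat, forall i, (n <= i)%N -> f i = 0.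
Lemma sum_ext_bound (f : nat -> V) m k : (forall i, (m <= i)%N -> f i = 0) -> (m <= k)%N ->
  \sum_(i < k) f i = \sum_(i < m) f i.
Proof.
move=> hf hmk; rewrite -!(big_mkord xpredT f) (@big_cat_nat _ _ _ m 0 k _ _ (leq0n m) hmk) /=.
rewrite [X in _ + X]big1_seq ?addr0 // => i /andP[_]; rewrite mem_index_iota => /andP[hi _].
exact: hf.
Qed.
Lemma fsumE (f : nat -> V) n : (forall i, (n <= i)%N -> f i = 0) -> fsum f = \sum_(i < n) f i.
Proof.
move=> hf; rewrite /fsum; case: excluded_middle_informative => [H|H]; last first.
  by exfalso; apply: H; exists n.
case: (constructive_indefinite_description _ H) => m /= hm.
rewrite -(sum_ext_bound hm (leq_maxl m n)) -(sum_ext_bound hf (leq_maxr m n)) //.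
Qed.
Lemma fsum_nsupp (f : nat -> V) : ~ fsupp f -> fsum f = 0.
Proof. by move=> H; rewrite /fsum; case: excluded_middle_informative. Qed.
Lemma fsuppD f h : fsupp f -> fsupp h -> fsupp (fun i => f i + h i).
Proof.
move=> [m hm] [n hn]; exists (maxn m n) => i hi.
by rewrite hm ?hn ?addr0 // (leq_trans _ hi) // ?leq_maxl ?leq_maxr.
Qed.
Lemma fsumD f h : fsupp f -> fsupp h -> fsum (fun i => f i + h i) = fsum f + fsum h.
Proof.
move=> [m hm] [n hn].
have hm' : forall i, (maxn m n <= i)%N -> f i = 0 by move=> i hi; rewrite hm // (leq_trans _ hi) // leq_maxl.
have hn' : forall i, (maxn m n <= i)%N -> h i = 0 by move=> i hi; rewrite hn // (leq_trans _ hi) // leq_maxr.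
rewrite (fsumE hm') (fsumE hn') (@fsumE _ (maxn m n)) ?big_split // => i hi.
by rewrite hm' ?hn' ?addr0.
Qed.
Lemma fsum_ext (f h : nat -> V) : (forall i, f i = h i) -> fsum f = fsum h.
Proof. by move=> e; congr fsum; apply: functional_extensionality. Qed.
Lemma fsum0 : fsum (fun _ => (0 : V)) = 0.
Proof. by rewrite (@fsumE _ 0) ?big_ord0. Qed.
Lemma fsupp_sum (I : eqType) (s : seq I) (F : I -> nat -> V) :
  (forall p, p \in s -> fsupp (F p)) -> fsupp (fun i => \sum_(p <- s) F p i).
Proof.
elim: s => [|x s IH] H; first by exists 0%N => i _; rewrite big_nil.
have [n hn] : fsupp (fun i => F x i + \sum_(p <- s) F p i).
  apply: fsuppD; first by apply: H; rewrite mem_head.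
  by apply: IH => p hp; apply: H; rewrite in_cons hp orbT.
by exists n => i hi; rewrite big_cons hn.
Qed.
Lemma fsum_sum (I : eqType) (s : seq I) (F : I -> nat -> V) :
  (forall p, p \in s -> fsupp (F p)) ->
  fsum (fun i => \sum_(p <- s) F p i) = \sum_(p <- s) fsum (F p).
Proof.
elim: s => [|x s IH] H.
  by rewrite big_nil (@fsum_ext _ (fun _ => 0)) ?fsum0 // => i; rewrite big_nil.
have H1 : fsupp (F x) by apply: H; rewrite mem_head.
have H2 : forall p, p \in s -> fsupp (F p) by move=> p hp; apply: H; rewrite in_cons hp orbT.
rewrite big_cons -IH // -fsumD //; last exact: fsupp_sum.
by apply: fsum_ext => i; rewrite big_cons.
Qed.
End Fsum.

Lemma regroup (C : pzRingType) (V : lmodType C) (f : nat -> nat -> C) (G : nat -> V) n :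
  (forall l, (n <= l)%N -> G l = 0) ->
  \sum_(i < n) \sum_(i' < n) f i i' *: G (i + i')%N =
  \sum_(l < n) (\sum_(i < l.+1) f i (l - i)%N) *: G l.
Proof.
move=> hG.
rewrite -(big_mkord xpredT (fun l => (\sum_(i < l.+1) f i (l - i)%N) *: G l)).
under eq_bigr do rewrite -(big_mkord xpredT (fun i => f i (_ - i)%N)) scaler_suml.
rewrite tri_ex -(big_mkord xpredT (fun i => \sum_(i' < n) f i i' *: G (i + i')%N)).
apply: eq_big_nat => i /andP[_ hi].
rewrite -(big_mkord xpredT (fun i' => f i i' *: G (i + i')%N)).
rewrite (@big_cat_nat _ _ _ (n - i) 0 n _ _ (leq0n _) (leq_subr _ _)) /=.
rewrite [X in _ + X]big1_seq ?addr0; last first.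
  move=> j /andP[_]; rewrite mem_index_iota => /andP[hj _].
  by rewrite hG ?scaler0 //; lia.
rewrite (big_addn 0 _ i).
by apply: eq_big_nat => j _; rewrite addnK addnC.
Qed.

Section VOA.
Variables (C : numClosedFieldType) (V : lmodType C) (Y : V -> int -> V -> V) (one omega : V).
Hypothesis HVA : is_vertex_algebra Y one.
Hypothesis Hdec : forall v, exists s : seq (int * V),
    (forall p, p \in s -> in_weight Y omega p.1 p.2) /\ v = \sum_(p <- s) p.2.

Lemma Ylin1 a u1 u2 k v : Y (a *: u1 + u2) k v = a *: Y u1 k v + Y u2 k v.
Proof. by case: HVA. Qed.
Lemma Ylin2 u k a v1 v2 : Y u k (a *: v1 + v2) = a *: Y u k v1 + Y u k v2.
Proof. by case: HVA. Qed.
Lemma Ytrunc u v : exists N : int, forall k : int, N <= k -> Y u k v = 0.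
Proof. by case: HVA => _ _ [] + _. Qed.
Lemma Ycrea u : Y u (-1) one = u /\ (forall k : int, 0 <= k -> Y u k one = 0).
Proof. by case: HVA => _ _ [] _ _ +. Qed.

Lemma Y0l k v : Y 0 k v = 0.
Proof.
have := Ylin1 1 0 0 k v; rewrite !scale1r addr0 => h.
by apply: (@addrI _ (Y 0 k v)); rewrite addr0 -h.
Qed.
Lemma YDl u1 u2 k v : Y (u1 + u2) k v = Y u1 k v + Y u2 k v.
Proof. by have := Ylin1 1 u1 u2 k v; rewrite !scale1r. Qed.
Lemma YZl a u k v : Y (a *: u) k v = a *: Y u k v.
Proof. by have := Ylin1 a u 0 k v; rewrite !addr0 Y0l addr0. Qed.
Lemma Y0r u k : Y u k 0 = 0.
Proof.
have := Ylin2 u k 1 0 0; rewrite !scale1r addr0 => h.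
by apply: (@addrI _ (Y u k 0)); rewrite addr0 -h.
Qed.
Lemma YDr u k v1 v2 : Y u k (v1 + v2) = Y u k v1 + Y u k v2.
Proof. by have := Ylin2 u k 1 v1 v2; rewrite !scale1r. Qed.
Lemma YZr u k a v : Y u k (a *: v) = a *: Y u k v.
Proof. by have := Ylin2 u k a v 0; rewrite !addr0 Y0r addr0. Qed.
Lemma Ysuml (I : Type) (s : seq I) (F : I -> V) k v :
  Y (\sum_(p <- s) F p) k v = \sum_(p <- s) Y (F p) k v.
Proof. by elim/big_rec2: _ => [|p a b _ <-]; rewrite ?Y0l ?YDl. Qed.

Local Notation L0 := (L0 Y omega).
Lemma L0D x y : L0 (x + y) = L0 x + L0 y. Proof. exact: YDr. Qed.
Lemma L0Z a x : L0 (a *: x) = a *: L0 x. Proof. exact: YZr. Qed.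
Lemma L00 : L0 0 = 0. Proof. exact: Y0r. Qed.
Lemma L0_sum (I : Type) (s : seq I) (F : I -> V) :
  L0 (\sum_(p <- s) F p) = \sum_(p <- s) L0 (F p).
Proof. by elim/big_rec2: _ => [|p a b _ <-]; rewrite ?L00 ?L0D. Qed.
Lemma iterL0_sum (I : Type) (s : seq I) (F : I -> V) j :
  iter j L0 (\sum_(p <- s) F p) = \sum_(p <- s) iter j L0 (F p).
Proof.
by elim: j => [|j IH] //=; rewrite IH L0_sum.
Qed.
Lemma binprod_sum (I : Type) (s : seq I) (F : I -> V) a i :
  binprod L0 a i (\sum_(p <- s) F p) = \sum_(p <- s) binprod L0 a i (F p).
Proof.
elim: i => [|i IH] //=; rewrite IH L0_sum scaler_sumr -big_split.
by [].
Qed.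
Lemma binop_sum (I : Type) (s : seq I) (F : I -> V) a i :
  binop L0 a i (\sum_(p <- s) F p) = \sum_(p <- s) binop L0 a i (F p).
Proof. by rewrite /binop binprod_sum scaler_sumr. Qed.

Section Hom.
Variables (n : int) (u : V).
Hypothesis hu : in_weight Y omega n u.
Local Notation w := (n%:~R : C).
Lemma iterL0_hom j : iter j L0 u = (w ^+ j) *: u.
Proof.
elim: j => [|j IH] /=; first by rewrite scale1r.
by rewrite IH L0Z hu scalerA exprS mulrC.
Qed.
Lemma binop_hom a i : binop L0 a i u = binC (w + a) i *: u.
Proof.
rewrite /binop /binC mulrC -scalerA; congr (_ *: _).
elim: i => [|i IH] /=; first by rewrite big_ord0 scale1r.
rewrite IH L0Z hu !scalerA -scalerDl big_ord_recr /=; congr (_ *: _); ring.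
Qed.
Lemma resVOA_hom a K v :
  resVOA Y omega a K u v = fsum (fun i => binC (w + a) i *: Y u (i%:Z - K) v).
Proof. by apply: fsum_ext => i; rewrite binop_hom YZl. Qed.
Lemma expY_term_hom k v i :
  \sum_(j < i.+1) (((j`!)%:R)^-1 * pszpow (@Eser C) (- (k + i%:Z) - 1) (i - j)%N)
              *: Y (iter j L0 u) (k + i%:Z) v
  = psmul (expser w) (pszpow (Eser C) (- (k + i%:Z) - 1)) i *: Y u (k + i%:Z) v.
Proof.
rewrite /psmul scaler_suml; apply: eq_bigr => j _.
rewrite iterL0_hom YZl scalerA /expser; congr (_ *: _); ring.
Qed.
Lemma expY_hom k v : expY Y omega u k v =
  fsum (fun i => psmul (expser w) (pszpow (Eser C) (- (k + i%:Z) - 1)) i *: Y u (k + i%:Z) v).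
Proof. by apply: fsum_ext => i; rewrite expY_term_hom. Qed.
Lemma expY_hom_zero v : exists N : int, forall k, N <= k -> expY Y omega u k v = 0.
Proof.
have [N hN] := Ytrunc u v; exists N => k hk.
rewrite expY_hom (@fsumE _ _ 0%N) ?big_ord0 // => i _.
by rewrite hN ?scaler0 //; lia.
Qed.
Lemma resVOA_hom_fsupp a K v : fsupp (fun i => Y (binop L0 a i u) (i%:Z - K) v).
Proof.
have [N hN] := Ytrunc u v.
by exists (absz (N + K)) => i hi; rewrite binop_hom YZl hN ?scaler0 //; lia.
Qed.
Lemma expY_hom_fsupp k v : fsupp (fun i => psmul (expser w) (pszpow (Eser C) (- (k + i%:Z) - 1)) i *: Y u (k + i%:Z) v).
Proof.
have [N hN] := Ytrunc u v.
by exists (absz (N - k)) => i hi; rewrite hN ?scaler0 //; lia.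
Qed.
Lemma res_hom a K v : resVOA Y omega (a - 1) K u v = resVA (expY Y omega) a K u v.
Proof.
have [N hN] := Ytrunc u v.
pose B := absz (N + K).
have hB : forall i : nat, (B <= i)%N -> N <= i%:Z - K by move=> i; rewrite /B; lia.
rewrite resVOA_hom (@fsumE _ _ B); last by move=> i hi; rewrite hN ?scaler0 // hB.
rewrite /resVA (@fsumE _ _ B); last first.
  move=> i hi; rewrite expY_hom (@fsumE _ _ 0%N) ?big_ord0 ?scaler0 //.
  by move=> j _; rewrite hN ?scaler0 //; have := hB i hi; lia.
transitivity (\sum_(i < B) \sum_(i' < B)
   (psmul (expser a) (pszpow (Eser C) (- K)) i *
    psmul (expser w) (pszpow (Eser C) (- ((i%:Z - K) + i'%:Z) - 1)) i') *:
      Y u ((i + i')%N%:Z - K) v); last first.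
  apply: eq_bigr => i _; rewrite expY_hom (@fsumE _ _ B); last first.
    by move=> j hj; rewrite hN ?scaler0 //; have := hB j hj; lia.
  rewrite scaler_sumr; apply: eq_bigr => j _; rewrite scalerA; congr (_ *: Y u _ v); lia.
rewrite (@regroup _ _ (fun i i' => psmul (expser a) (pszpow (Eser C) (- K)) i *
    psmul (expser w) (pszpow (Eser C) (- ((i%:Z - K) + i'%:Z) - 1)) i')
   (fun l => Y u (l%:Z - K) v)); last by move=> l hl; rewrite hN // hB.
apply: eq_bigr => l _; congr (_ *: _).
rewrite coef_key; congr binC; ring.
Qed.
End Hom.


Lemma res_all a K u v : resVOA Y omega (a - 1) K u v = resVA (expY Y omega) a K u v.
Proof.
have [s [hs ->]] := Hdec u.
have L : resVOA Y omega (a - 1) K (\sum_(p <- s) p.2) v =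
         \sum_(p <- s) resVOA Y omega (a - 1) K p.2 v.
  rewrite /resVOA -fsum_sum; last by move=> p hp; apply: resVOA_hom_fsupp; apply: hs.
  by apply: fsum_ext => i; rewrite binop_sum Ysuml.
have E1 : forall k, expY Y omega (\sum_(p <- s) p.2) k v = \sum_(p <- s) expY Y omega p.2 k v.
  move=> k; rewrite /expY -fsum_sum; last first.
    move=> p hp; have [m hm] := expY_hom_fsupp p.1 p.2 k v.
    by exists m => i hi; rewrite (expY_term_hom (hs p hp)) hm.
  apply: fsum_ext => i; rewrite exchange_big /=; apply: eq_bigr => j _.
  by rewrite iterL0_sum Ysuml scaler_sumr.
have R : resVA (expY Y omega) a K (\sum_(p <- s) p.2) v =
         \sum_(p <- s) resVA (expY Y omega) a K p.2 v.
  rewrite /resVA -fsum_sum; last first.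
    move=> p hp; have [N hN] := expY_hom_zero (hs p hp) v.
    by exists (absz (N + K)) => i hi; rewrite hN ?scaler0 //; lia.
  by apply: fsum_ext => i; rewrite E1 scaler_sumr.
rewrite L R; apply: eq_big_seq => p hp; exact: res_hom (hs p hp) _ _ _.
Qed.
End VOA.

Section Aut.
Variables (C : numClosedFieldType) (V : lmodType C) (Y : V -> int -> V -> V) (one omega : V) (g : V -> V).
Hypothesis Hg : is_VOA_aut Y one omega g.
Lemma g_lin a u v : g (a *: u + v) = a *: g u + g v. Proof. by case: Hg => -[]. Qed.
Lemma g_hom u k v : g (Y u k v) = Y (g u) k (g v). Proof. by case: Hg => -[]. Qed.
Lemma g_inj : injective g. Proof. by case: Hg => -[_ /bij_inj]. Qed.
Lemma g0 : g 0 = 0.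
Proof.
have := g_lin 1 0 0; rewrite !scale1r addr0 => h.
by apply: (@addrI _ (g 0)); rewrite addr0 -h.
Qed.
Lemma gD u v : g (u + v) = g u + g v. Proof. by have := g_lin 1 u v; rewrite !scale1r. Qed.
Lemma gZ a u : g (a *: u) = a *: g u. Proof. by have := g_lin a u 0; rewrite addr0 g0 addr0. Qed.
Lemma g_sum (I : Type) (s : seq I) (F : I -> V) : g (\sum_(p <- s) F p) = \sum_(p <- s) g (F p).
Proof. by elim/big_rec2: _ => [|p a b _ <-]; rewrite ?g0 ?gD. Qed.
Lemma g_fsum (f : nat -> V) : g (fsum f) = fsum (fun i => g (f i)).
Proof.
case: (classic (fsupp f)) => [[n hn]|hn].
  rewrite (fsumE hn) (@fsumE _ _ n); first by rewrite g_sum.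
  by move=> i hi; rewrite hn ?g0.
rewrite !fsum_nsupp ?g0 // => -[n hm]; apply: hn; exists n => i hi.
by apply: g_inj; rewrite g0 hm.
Qed.
Lemma g_L0 x : g (L0 Y omega x) = L0 Y omega (g x).
Proof. by rewrite /L0 /Lop g_hom; case: Hg => _ ->. Qed.
Lemma g_iterL0 j x : g (iter j (L0 Y omega) x) = iter j (L0 Y omega) (g x).
Proof. by elim: j => [|j IH] //=; rewrite g_L0 IH. Qed.
Lemma aut_exp : is_VA_aut (expY Y omega) one g.
Proof.
case: Hg => -[h1 h2 h3 h4] _; split => // u k v.
rewrite /expY g_fsum; apply: fsum_ext => i; rewrite g_sum; apply: eq_bigr => j _.
by rewrite gZ g_hom g_iterL0.
Qed.
End Aut.

Section Dop.
Variables (C : numClosedFieldType) (V : lmodType C) (Y : V -> int -> V -> V) (one omega : V) (c : C).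
Hypothesis HV : is_VOA Y one omega c.
Lemma HVA' : is_vertex_algebra Y one. Proof. by case: HV. Qed.
Lemma Lm1_der w k v : Y (Lop Y omega (-1) w) k v = - (k%:~R) *: Y w (k - 1) v.
Proof. by case: HV. Qed.
Lemma Dop_exp u : Dop (expY Y omega) one u = Lm1L0 Y omega u.
Proof.
have [_ cr] := Ycrea HVA' u.
rewrite /Dop /expY (@fsumE _ _ 2%N); last first.
  move=> i hi; apply: big1 => j _; rewrite (Ycrea HVA' _).2 ?scaler0 //; lia.
rewrite !big_ord_recl big_ord0 /= big_ord0 addr0 /=.
have e1 : (- (-2 + 0%:Z) - 1 = 1 :> int) by [].
have e2 : (- (-2 + 1%:Z) - 1 = 0 :> int) by [].
have e3 : (-2 + 0%:Z = -2 :> int) by [].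
have e4 : (-2 + 1%:Z = -1 :> int) by [].
rewrite /bump /= big_ord0 !addr0 /psmul big_ord_recl big_ord0 addr0 /ps1 /Eser /=.
have f0 : ((0`!)%:R^-1 : C) = 1 by rewrite fact0 invr1.
have f1 : ((1`!)%:R^-1 : C) = 1 by rewrite (_ : 1`! = 1%N) // invr1.
have e : (-2 + (1 + 0)%N%:Z = -1 :> int) by [].
rewrite (_ : (1 + 0)%N = 1%N) // !factS !fact0 !muln1 !invr1 !mulr1 mulr0 scale0r add0r !scale1r e.
rewrite /Lm1L0; congr (_ + _); last exact: (Ycrea HVA' _).1.
rewrite -[RHS](Ycrea HVA' _).1 Lm1_der (_ : (-1 - 1 : int) = -2) //.
by rewrite (_ : (-1 : int)%:~R = -1 :> C) ?opprK ?scale1r // mulrN1z.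
Qed.

End Dop.
Theorem lemma8p7 (C : numClosedFieldType) (V : lmodType C)
    (Y : V -> int -> V -> V) (one omega : V) (c : C) (g : V -> V) (T N M : nat) :
  is_VOA Y one omega c -> is_VOA_aut Y one omega g -> has_order g T ->
  [/\ is_VA_aut (expY Y omega) one g,
      (* A_{g,n}(V,omega) = A~_{g,n}(exp(V,omega)) *)
      (
      (* O_{g,n}(V) = O~_{g,n}(exp(V,omega)) *)
      (forall v, OV_n Y omega g T N v <-> OE_n (expY Y omega) one g T N v) /\
      (* the products of A_{g,n}(V,omega) and A~_{g,n}(exp(V,omega)) agree *)
      (forall u v, OV_n Y omega g T N
                     (starV Y omega g T N N N u v - bulletE (expY Y omega) g T N N N u v)))
    & (* A_{g,n,m}(V,omega) = A~_{g,n,m}(exp(V,omega)) *)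
      [/\ (* O_{g,n,m}(V) = O~_{g,n,m}(exp(V,omega)) *)
      (forall v, OV_nm Y omega g T N M v <-> OE_nm (expY Y omega) one g T N M v),
      (* left actions agree on A_{g,n,m} *)
      (forall u v, OV_nm Y omega g T N M
                     (starV Y omega g T M N N u v - bulletE (expY Y omega) g T M N N u v))
    & (* right actions agree on A_{g,n,m} *)
      (forall u v, OV_nm Y omega g T N M
                     (starV Y omega g T M M N u v - bulletE (expY Y omega) g T M M N u v))]].

Proof.
move=> HV Hg _.
have HVA := HVA' HV.
have Hdec : forall v, exists s : seq (int * V),
    (forall p, p \in s -> in_weight Y omega p.1 p.2) /\ v = \sum_(p <- s) p.2.
  by case: HV => _ [].
have RES : forall x y K u v, resVOA Y omega (-1 + x + y) K u v = resVA (expY Y omega) (0 + x + y) K u v.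
  move=> x y K u v; have -> : -1 + x + y = (0 + x + y) - 1 by ring.
  exact: (res_all HVA Hdec).
have PR : prod g T (resVOA Y omega) (-1) = prod g T (resVA (expY Y omega)) 0.
  do 5 apply: functional_extensionality => ?.
  rewrite /prod; apply: eq_bigr => r _; rewrite /prod_r /expo.
  case: ifP => // _; apply: eq_bigr => i _; by rewrite RES.
have CR : circ_r T (resVOA Y omega) (-1) = circ_r T (resVA (expY Y omega)) 0.
  do 5 apply: functional_extensionality => ?.
  by rewrite /circ_r /expo RES.
have DD : Lm1L0 Y omega = Dop (expY Y omega) one.
  by apply: functional_extensionality => u; rewrite (Dop_exp HV).
have OP : forall N M, Oprime g T (resVOA Y omega) (-1) (Lm1L0 Y omega) N M =
                      Oprime g T (resVA (expY Y omega)) 0 (Dop (expY Y omega) one) N M.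
  by move=> N' M'; rewrite /Oprime CR DD.
have OF : forall N M, Ofull g T (resVOA Y omega) (-1) (Lm1L0 Y omega) N M =
                      Ofull g T (resVA (expY Y omega)) 0 (Dop (expY Y omega) one) N M.
  have OPf : Oprime g T (resVOA Y omega) (-1) (Lm1L0 Y omega) =
             Oprime g T (resVA (expY Y omega)) 0 (Dop (expY Y omega) one).
    by do 2 apply: functional_extensionality => ?; rewrite OP.
  by move=> N' M'; rewrite /Ofull /O2 /O3 OPf PR.
split.
- exact: aut_exp Hg.
- split.
    by move=> v; rewrite /OV_n /OE_n /On OP.
  move=> u v; rewrite /starV /bulletE PR subrr /OV_n /On /Oprime; exact: span0.
- split.
  + by move=> v; rewrite /OV_nm /OE_nm OF.
  + move=> u v; rewrite /starV /bulletE PR subrr /OV_nm /Ofull; exact: span0.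
  + move=> u v; rewrite /starV /bulletE PR subrr /OV_nm /Ofull; exact: span0.
Qed.
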